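(* Let $P$ be a convex polygon, let $\mathcal{R}$ be the smallest axis-parallel rectangle containing $P$, with side lengths $L\ge W>0$, and let $r=\frac14\sqrt{L^2+4W^2}$. Suppose that $P$ has four distinct vertices lying respectively on the four different sides of $\mathcal{R}$ and forming a (nondegenerate) quadrilateral. Then $r\le 2\,r_{opt}(P)$.
   Context: For a compact set $X\subset\mathbb{R}^2$, $r_{opt}(X)$ denotes the minimum $r$ such that two closed disks of radius $r$ have union containing $X$. The number $r$ is the radius of the two congruent disks circumscribing the two halves $\frac L2\times W$ of $\mathcal{R}$ obtained by splitting it through its longer sides' midpoints. *)

(* Defs.v *)
From HB Require Import structures.
From mathcomp Require Import all_boot all_order all_algebra.
From mathcomp Require Import boolp classical_sets reals.
Set Implicit Arguments. Unset Strict Implicit. Unset Printing Implicit Defensive.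
Import Order.TTheory GRing.Theory Num.Theory.
Local Open Scope ring_scope.
Local Open Scope classical_set_scope.

Section Defs.
Variable R : realType.

Definition pt := (R * R)%type.

Definition conv_hull (s : seq pt) : set pt :=
  [set p | exists w : 'I_(size s) -> R,
      (forall i, 0 <= w i) /\ \sum_(i < size s) w i = 1 /\
      p.1 = \sum_(i < size s) w i * (nth (0,0) s i).1 /\
      p.2 = \sum_(i < size s) w i * (nth (0,0) s i).2].

Definition convex_polygon (P : set pt) : Prop :=
  exists s : seq pt, (0 < size s)%N /\ P = conv_hull s.

Definition is_vertex (X : set pt) (v : pt) : Prop :=
  X v /\ forall a b : pt, X a -> X b -> forall t : R, 0 < t < 1 ->
    v = ((1 - t) * a.1 + t * b.1, (1 - t) * a.2 + t * b.2) -> a = b.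

Definition rect (x0 x1 y0 y1 : R) : set pt :=
  [set p | x0 <= p.1 <= x1 /\ y0 <= p.2 <= y1].

Definition is_bounding_box (X : set pt) (x0 x1 y0 y1 : R) : Prop :=
  x0 <= x1 /\ y0 <= y1 /\ X `<=` rect x0 x1 y0 y1 /\
  forall a0 a1 b0 b1 : R, a0 <= a1 -> b0 <= b1 ->
    X `<=` rect a0 a1 b0 b1 -> rect x0 x1 y0 y1 `<=` rect a0 a1 b0 b1.

Definition left_side (x0 x1 y0 y1 : R) : set pt := [set p | p.1 = x0 /\ y0 <= p.2 <= y1].
Definition right_side (x0 x1 y0 y1 : R) : set pt := [set p | p.1 = x1 /\ y0 <= p.2 <= y1].
Definition bottom_side (x0 x1 y0 y1 : R) : set pt := [set p | p.2 = y0 /\ x0 <= p.1 <= x1].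
Definition top_side (x0 x1 y0 y1 : R) : set pt := [set p | p.2 = y1 /\ x0 <= p.1 <= x1].

Definition collinear (a b c : pt) : Prop :=
  (b.1 - a.1) * (c.2 - a.2) - (b.2 - a.2) * (c.1 - a.1) = 0.

Definition disk (c : pt) (r : R) : set pt :=
  [set p | (p.1 - c.1) ^+ 2 + (p.2 - c.2) ^+ 2 <= r ^+ 2].

Definition r_opt (X : set pt) : R :=
  inf [set r : R | 0 <= r /\ exists c1 c2 : pt, X `<=` disk c1 r `|` disk c2 r].

End Defs.

(* Main.v *)
Require Import Defs.
From HB Require Import structures.
From mathcomp Require Import all_boot all_order all_algebra.
From mathcomp Require Import boolp classical_sets reals.
From mathcomp Require Import ring lra.
Import Order.TTheory GRing.Theory Num.Theory.
Local Open Scope ring_scope.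
Local Open Scope classical_set_scope.
Set Implicit Arguments. Unset Strict Implicit.
Import Order.TTheory GRing.Theory Num.Theory.
Local Open Scope ring_scope.

Definition det8 {R : realFieldType} (t s : R) : R := (6%:R) * t^+0 * s^+0 + -(15%:R) * t^+0 * s^+2 + (15%:R) * t^+0 * s^+3 + -(12%:R) * t^+1 * s^+0 + -(10%:R) * t^+1 * s^+1 + (31%:R) * t^+1 * s^+2 + -(24%:R) * t^+1 * s^+3 + (17%:R) * t^+2 * s^+0 + -(3%:R) * t^+2 * s^+1 + (4%:R) * t^+2 * s^+2 + (12%:R) * t^+2 * s^+3 + -(3%:R) * t^+3 * s^+0 + -(12%:R) * t^+3 * s^+2.

Lemma det8_ge0 (R : realFieldType) (t s : R) : 0 <= t -> t <= 1 -> 0 <= s -> s <= 1 ->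
  0 <= det8 t s.
Proof.
move=> t0 t1 s0 s1.
have t0' : 0 <= 1 - t by lra.
have s0' : 0 <= 1 - s by lra.
have -> : det8 t s = 6%:R * (t^+0 * (1-t)^+5 * (s^+0 * (1-s)^+5)) + 30%:R * (t^+0 * (1-t)^+5 * (s^+1 * (1-s)^+4)) + 45%:R * (t^+0 * (1-t)^+5 * (s^+2 * (1-s)^+3)) + 30%:R * (t^+0 * (1-t)^+5 * (s^+3 * (1-s)^+2)) + 15%:R * (t^+0 * (1-t)^+5 * (s^+4 * (1-s)^+1)) + 6%:R * (t^+0 * (1-t)^+5 * (s^+5 * (1-s)^+0)) + 18%:R * (t^+1 * (1-t)^+4 * (s^+0 * (1-s)^+5)) + 80%:R * (t^+1 * (1-t)^+4 * (s^+1 * (1-s)^+4)) + 96%:R * (t^+1 * (1-t)^+4 * (s^+2 * (1-s)^+3)) + 39%:R * (t^+1 * (1-t)^+4 * (s^+3 * (1-s)^+2)) + 20%:R * (t^+1 * (1-t)^+4 * (s^+4 * (1-s)^+1)) + 15%:R * (t^+1 * (1-t)^+4 * (s^+5 * (1-s)^+0)) + 29%:R * (t^+2 * (1-t)^+3 * (s^+0 * (1-s)^+5)) + 102%:R * (t^+2 * (1-t)^+3 * (s^+1 * (1-s)^+4)) + 96%:R * (t^+2 * (1-t)^+3 * (s^+2 * (1-s)^+3)) + 32%:R * (t^+2 * (1-t)^+3 * (s^+3 * (1-s)^+2)) + 39%:R * (t^+2 * (1-t)^+3 * (s^+4 * (1-s)^+1)) + 30%:R * (t^+2 * (1-t)^+3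 * (s^+5 * (1-s)^+0)) + 36%:R * (t^+3 * (1-t)^+2 * (s^+0 * (1-s)^+5)) + 111%:R * (t^+3 * (1-t)^+2 * (s^+1 * (1-s)^+4)) + 120%:R * (t^+3 * (1-t)^+2 * (s^+2 * (1-s)^+3)) + 96%:R * (t^+3 * (1-t)^+2 * (s^+3 * (1-s)^+2)) + 96%:R * (t^+3 * (1-t)^+2 * (s^+4 * (1-s)^+1)) + 45%:R * (t^+3 * (1-t)^+2 * (s^+5 * (1-s)^+0)) + 27%:R * (t^+4 * (1-t)^+1 * (s^+0 * (1-s)^+5)) + 86%:R * (t^+4 * (1-t)^+1 * (s^+1 * (1-s)^+4)) + 111%:R * (t^+4 * (1-t)^+1 * (s^+2 * (1-s)^+3)) + 102%:R * (t^+4 * (1-t)^+1 * (s^+3 * (1-s)^+2)) + 80%:R * (t^+4 * (1-t)^+1 * (s^+4 * (1-s)^+1)) + 30%:R * (t^+4 * (1-t)^+1 * (s^+5 * (1-s)^+0)) + 8%:R * (t^+5 * (1-t)^+0 * (s^+0 * (1-s)^+5)) + 27%:R * (t^+5 * (1-t)^+0 * (s^+1 * (1-s)^+4)) + 36%:R * (t^+5 * (1-t)^+0 * (s^+2 * (1-s)^+3)) + 29%:R * (t^+5 * (1-t)^+0 * (s^+3 * (1-s)^+2)) + 18%:R * (t^+5 * (1-t)^+0 * (s^+4 * (1-s)^+1)) + 6%:R * (t^+5 * (1-t)^+0 * (s^+5 * (1-s)^+0)) by rewrite /det8; ring.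
repeat (apply: addr_ge0); repeat (apply: mulr_ge0); rewrite ?ler0n //; exact: exprn_ge0.
Qed.

Lemma sx_bound (R : realFieldType) (b d X t s : R) : 0 <= t -> t <= 1 -> 0 <= s -> s <= 1 ->
  ((5 + 3 * (t - s))/8)  *  X^+2 <= ((1-t) * b+t * X)^+2 + ((1-t) * b+t * X - d)^+2 + (X - s * d)^+2 + (s * d-b)^+2.
Proof.
move=> t0 t1 s0 s1.
have hd := det8_ge0 t0 t1 s0 s1.
set pp := 1 - t.
set a11 := 2 * pp^+2+1. set a12 := -(pp+s). set a13 := 2 * pp * t. set a22 := 1+2 * s^+2.
set a23 := -(t+s). set a33 := 2 * t^+2+1-(5 + 3 * (t - s))/8.
set D2 := a11 * a22 - a12^+2. set c := a11 * a23 - a12 * a13. set e := a11 * a33 - a13^+2.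
have ha11 : 0 < a11 by rewrite /a11; have := sqr_ge0 pp; lra.
have hD2 : 0 < D2.
  have -> : D2 = (pp-s)^+2 + 1 + 4 * (pp * s)^+2 by rewrite /D2 /a11 /a12 /a22; ring.
  have := sqr_ge0 (pp-s); have := sqr_ge0 (pp * s); lra.
rewrite -subr_ge0.
have key : a11  *  D2  *  (((1-t) * b+t * X)^+2 + ((1-t) * b+t * X - d)^+2 + (X - s * d)^+2 + (s * d-b)^+2 - (5 + 3 * (t - s))/8  *  X^+2)
   = D2  *  (a11 * b + a12 * d + a13 * X)^+2 + (D2 * d + c * X)^+2 + a11  *  (det8 t s / 8)  *  X^+2.
  rewrite /D2 /c /e /a11 /a12 /a13 /a22 /a23 /a33 /pp /det8. field; rewrite ?pnatr_eq0 //.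
have : 0 <= a11  *  D2  *  (((1-t) * b+t * X)^+2 + ((1-t) * b+t * X - d)^+2 + (X - s * d)^+2 + (s * d-b)^+2 - (5 + 3 * (t - s))/8  *  X^+2).
  rewrite key. apply: addr_ge0; [apply: addr_ge0|].
  - apply: mulr_ge0; [exact: ltW | exact: sqr_ge0].
  - exact: sqr_ge0.
  - apply: mulr_ge0; [apply: mulr_ge0; [exact: ltW | lra] | exact: sqr_ge0].
by rewrite pmulr_rge0 // mulr_gt0.
Qed.

Definition dist2 {R : realType} (p q : pt R) : R := (p.1-q.1)^+2 + (p.2-q.2)^+2.
Definition comb {R : realType} (p q : pt R) (t : R) : pt R :=
  ((1-t) * p.1 + t * q.1, (1-t) * p.2 + t * q.2).
Definition fsep {R : realType} (c1 c2 z : pt R) : R := dist2 z c1 - dist2 z c2.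
Definition refl {R : realType} (p : pt R) : pt R := (p.1, - p.2).

Lemma conv_hull_comb (R : realType) (sq : seq (pt R)) p q t :
  conv_hull sq p -> conv_hull sq q -> 0 <= t -> t <= 1 -> conv_hull sq (comb p q t).
Proof.
move=> [w1 [w10 [w11 [w1x w1y]]]] [w2 [w20 [w21 [w2x w2y]]]] t0 t1.
exists (fun i => (1-t)  *  w1 i + t  *  w2 i); split; [|split; [|split]].
- move=> i; apply: addr_ge0; apply: mulr_ge0 => //; lra.
- rewrite big_split /= -!mulr_sumr w11 w21; ring.
- rewrite /comb /= w1x w2x !mulr_sumr -big_split /=; apply: eq_bigr => i _; ring.
- rewrite /comb /= w1y w2y !mulr_sumr -big_split /=; apply: eq_bigr => i _; ring.
Qed.

Lemma same_disk (R : realType) (c p q : pt R) (r : R) :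
  disk c r p -> disk c r q -> dist2 p q <= 4  *  r^+2.
Proof.
rewrite /disk /dist2 /= => hp hq.
have := sqr_ge0 ((p.1-c.1)+(q.1-c.1)); have := sqr_ge0 ((p.2-c.2)+(q.2-c.2)).
have -> : p.1 - q.1 = (p.1-c.1) - (q.1-c.1) by ring.
have -> : p.2 - q.2 = (p.2-c.2) - (q.2-c.2) by ring.
move: hp hq; set a := p.1-c.1; set b := q.1-c.1; set u := p.2-c.2; set v := q.2-c.2.
move=>  * ; nra.
Qed.

Lemma dist2C (R : realType) (p q : pt R) : dist2 p q = dist2 q p.
Proof. rewrite /dist2; ring. Qed.

Lemma dist2_tri (R : realType) (p m q : pt R) : dist2 p q <= 2  *  dist2 p m + 2  *  dist2 m q.
Proof.
rewrite /dist2.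
have -> : p.1 - q.1 = (p.1-m.1) + (m.1-q.1) by ring.
have -> : p.2 - q.2 = (p.2-m.2) + (m.2-q.2) by ring.
set a := p.1-m.1; set b := m.1-q.1; set u := p.2-m.2; set v := m.2-q.2.
have := sqr_ge0 (a-b); have := sqr_ge0 (u-v); nra.
Qed.

Lemma fsep_comb (R : realType) (c1 c2 p q : pt R) t :
  fsep c1 c2 (comb p q t) = (1-t)  *  fsep c1 c2 p + t  *  fsep c1 c2 q.
Proof. rewrite /fsep /dist2 /comb /=; ring. Qed.

Lemma in_d1 (R : realType) (P : set (pt R)) c1 c2 r z :
  P `<=` disk c1 r `|` disk c2 r -> P z -> fsep c1 c2 z <= 0 -> disk c1 r z.
Proof.
move=> hc /hc [//|]; rewrite /disk /fsep /dist2 /= => h2 hf; lra.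
Qed.

Lemma in_d2 (R : realType) (P : set (pt R)) c1 c2 r z :
  P `<=` disk c1 r `|` disk c2 r -> P z -> 0 <= fsep c1 c2 z -> disk c2 r z.
Proof.
move=> hc /hc [|//]; rewrite /disk /fsep /dist2 /= => h2 hf; lra.
Qed.

Lemma near_b (R : realType) (P : set (pt R)) c1 c2 r z w :
  P `<=` disk c1 r `|` disk c2 r -> P z -> P w ->
  (fsep c1 c2 z <= 0) = (fsep c1 c2 w <= 0) -> dist2 z w <= 4  *  r^+2.
Proof.
move=> hc hz hw.
case: (lerP (fsep c1 c2 z) 0) => hfz; case: (lerP (fsep c1 c2 w) 0) => hfw //= _.
- by apply: (@same_disk _ c1); apply: (in_d1 hc).
- by apply: (@same_disk _ c2); apply: (in_d2 hc) => //; apply: ltW.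
Qed.

Lemma mid_b (R : realType) (P : set (pt R)) c1 c2 r z w :
  P `<=` disk c1 r `|` disk c2 r -> P z -> P w ->
  fsep c1 c2 w = 0 -> dist2 z w <= 4  *  r^+2.
Proof.
move=> hc hz hw hf.
case: (hc _ hz) => hz'.
- apply: (@same_disk _ c1) => //; apply: (in_d1 hc) => //; by rewrite hf.
- apply: (@same_disk _ c2) => //; apply: (in_d2 hc) => //; by rewrite hf.
Qed.

Lemma crossing (R : realType) (c1 c2 p q : pt R) :
  (fsep c1 c2 p <= 0) != (fsep c1 c2 q <= 0) ->
  exists t, [/\ 0 <= t, t <= 1 & fsep c1 c2 (comb p q t) = 0].
Proof.
set fp := fsep c1 c2 p; set fq := fsep c1 c2 q.
case: (lerP fp 0) => hp; case: (lerP fq 0) => hq //= _.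
- exists (- fp / (fq - fp)); split.
  + apply: divr_ge0; lra.
  + rewrite ler_pdivrMr; lra.
  + rewrite fsep_comb -/fp -/fq; field; lra.
- exists (fp / (fp - fq)); split.
  + apply: divr_ge0; lra.
  + rewrite ler_pdivrMr; lra.
  + rewrite fsep_comb -/fp -/fq; field; lra.
Qed.

Lemma core (R : realType) (vl vb vr vt : pt R) x0 x1 y0 y1 t s D :
  vl.1 = x0 -> vr.1 = x1 -> vb.2 = y0 -> vt.2 = y1 ->
  0 <= t -> t <= 1 -> 0 <= s -> s <= 1 -> x0 <= x1 -> y0 <= y1 ->
  dist2 vl (comb vb vr t) <= D -> dist2 vt (comb vb vr t) <= D ->
  dist2 vr (comb vl vt s) <= D -> dist2 vb (comb vl vt s) <= D ->
  Num.max (x1-x0) (y1-y0) ^+2 + 4  *  Num.min (x1-x0) (y1-y0) ^+2 <= 16  *  D.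
Proof.
case: vl => l1 l2; case: vb => b1 b2; case: vr => r1 r2; case: vt => u1 u2 /=.
move=> -> -> -> -> t0 t1 s0 s1 hx hy.
have Sx := @sx_bound _ (b1-x0) (u1-x0) (x1-x0) t s t0 t1 s0 s1.
have Sy := @sx_bound _ (l2-y0) (r2-y0) (y1-y0) s t s0 s1 t0 t1.
rewrite /dist2 /comb /=.
have -> : (x0 - ((1 - t)  *  b1 + t  *  x1)) ^+ 2 + (l2 - ((1 - t)  *  y0 + t  *  r2)) ^+ 2 =
  ((1-t) * (b1-x0)+t * (x1-x0))^+2 + (t * (r2-y0)-(l2-y0))^+2 by ring.
have -> : (u1 - ((1 - t)  *  b1 + t  *  x1)) ^+ 2 + (y1 - ((1 - t)  *  y0 + t  *  r2)) ^+ 2 =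
  ((1-t) * (b1-x0)+t * (x1-x0) - (u1-x0))^+2 + ((y1-y0) - t * (r2-y0))^+2 by ring.
have -> : (x1 - ((1 - s)  *  x0 + s  *  u1)) ^+ 2 + (r2 - ((1 - s)  *  l2 + s  *  y1)) ^+ 2 =
  ((x1-x0) - s * (u1-x0))^+2 + ((1-s) * (l2-y0)+s * (y1-y0) - (r2-y0))^+2 by ring.
have -> : (b1 - ((1 - s)  *  x0 + s  *  u1)) ^+ 2 + (y0 - ((1 - s)  *  l2 + s  *  y1)) ^+ 2 =
  (s * (u1-x0) - (b1-x0))^+2 + ((1-s) * (l2-y0)+s * (y1-y0))^+2 by ring.
move=> h1 h2 h3 h4.
have H : (5 + 3 * (t - s))/8  *  (x1-x0)^+2 + (5 + 3 * (s - t))/8  *  (y1-y0)^+2 <= 4  *  D by lra.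
move: H; set X := x1 - x0; set Y := y1 - y0 => H.
have hX : 0 <= X by rewrite /X; lra.
have hY : 0 <= Y by rewrite /Y; lra.
rewrite maxEle minEle; case: ifP => hXY.
- have hsq : X^+2 <= Y^+2 by nra.
  have hp : 0 <= ((5 + 3 * (s - t))/8 - 1/4)  *  (Y^+2 - X^+2) by apply: mulr_ge0; lra.
  nra.
- have hXY' : Y <= X by move/negbT: hXY; rewrite -ltNge => /ltW.
  have hsq : Y^+2 <= X^+2 by nra.
  have hp : 0 <= ((5 + 3 * (t - s))/8 - 1/4)  *  (X^+2 - Y^+2) by apply: mulr_ge0; lra.
  nra.
Qed.

Lemma refl_dist (R : realType) (p q w : pt R) t :
  dist2 (refl p) (comb (refl q) (refl w) t) = dist2 p (comb q w t).
Proof. rewrite /dist2 /comb /refl /=; ring. Qed.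

Lemma finA (R : realType) (X Y q : R) : 0 <= X -> 0 <= Y -> X^+2 <= 4 * q -> Y^+2 <= 16 * q ->
  Num.max X Y ^+2 + 4 * Num.min X Y ^+2 <= 64 * q.
Proof.
move=> hX hY h1 h2; rewrite maxEle minEle; case: ifP => h.
- have := sqr_ge0 X; lra.
- have h' : Y <= X by move/negbT: h; rewrite -ltNge => /ltW.
  have : Y^+2 <= X^+2 by nra.
  lra.
Qed.

Unset Implicit Arguments.

Theorem lemma1 (R : realType) (P : set (pt R)) (x0 x1 y0 y1 : R)
    (vl vr vb vt : pt R) :
  convex_polygon P ->
  is_bounding_box P x0 x1 y0 y1 ->
  let L := Num.max (x1 - x0) (y1 - y0) in
  let W := Num.min (x1 - x0) (y1 - y0) in
  0 < W ->
  is_vertex P vl -> is_vertex P vr -> is_vertex P vb -> is_vertex P vt ->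
  left_side x0 x1 y0 y1 vl -> right_side x0 x1 y0 y1 vr ->
  bottom_side x0 x1 y0 y1 vb -> top_side x0 x1 y0 y1 vt ->
  uniq [:: vl; vb; vr; vt] ->
  ~ collinear vl vb vr -> ~ collinear vl vb vt ->
  ~ collinear vl vr vt -> ~ collinear vb vr vt ->
  let r := Num.sqrt (L ^+ 2 + 4 * W ^+ 2) / 4 in
  r <= 2 * r_opt P.
Proof.
move=> [sq [_ hP]] [hx [hy [hbox _]]] L W Wpos [hl _] [hr _] [hb _] [ht _]
  [hl1 _] [hr1 _] [hb2 _] [ht2 _] _ _ _ _ _.
cbv zeta. set r := Num.sqrt _ / 4.
subst P.
have hX0 : 0 <= x1 - x0 by lra.
have hY0 : 0 <= y1 - y0 by lra.
have key : forall rho c1 c2, 0 <= rho -> conv_hull sq `<=` disk c1 rho `|` disk c2 rho ->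
   L^+2 + 4 * W^+2 <= 64 * rho^+2.
  move=> rho c1 c2 rho0 hc.
  have hr2 := sqr_ge0 rho.
  have Xe : (x1 - x0)^+2 <= dist2 vl vr.
    rewrite /dist2 hl1 hr1 -[(x0 - x1)^+2]sqrrN opprB; have := sqr_ge0 (vl.2 - vr.2); lra.
  have Ye : (y1 - y0)^+2 <= dist2 vb vt.
    rewrite /dist2 hb2 ht2 -[(y0 - y1)^+2]sqrrN opprB; have := sqr_ge0 (vb.1 - vt.1); lra.
  have far : forall z w, conv_hull sq z -> conv_hull sq w -> dist2 z w <= 16 * rho^+2.
    move=> z w hz hw.
    have [e|ne] := eqVneq (fsep c1 c2 z <= 0) (fsep c1 c2 w <= 0).
      have := near_b hc hz hw e; lra.
    have [t [t0 t1 ht0]] := crossing ne.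
    have hm := conv_hull_comb hz hw t0 t1.
    have h1 := mid_b hc hz hm ht0.
    have h2 := mid_b hc hw hm ht0.
    rewrite dist2C in h2.
    have := @dist2_tri _ z (comb z w t) w; lra.
  have [elr|nlr] := eqVneq (fsep c1 c2 vl <= 0) (fsep c1 c2 vr <= 0).
    have h1 := near_b hc hl hr elr. have h2 := far _ _ hb ht.
    rewrite /L /W; apply: finA => //; lra.
  have [ebt|nbt] := eqVneq (fsep c1 c2 vb <= 0) (fsep c1 c2 vt <= 0).
    have h1 := near_b hc hb ht ebt. have h2 := far _ _ hl hr.
    rewrite /L /W maxC minC; apply: finA => //; lra.
  have [elb|nlb] := eqVneq (fsep c1 c2 vl <= 0) (fsep c1 c2 vb <= 0).
    have nbr : (fsep c1 c2 vb <= 0) != (fsep c1 c2 vr <= 0) by rewrite -elb.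
    have nlt : (fsep c1 c2 vl <= 0) != (fsep c1 c2 vt <= 0) by rewrite elb.
    have [t [t0 t1 ht0]] := crossing nbr.
    have [s [s0 s1 hs0]] := crossing nlt.
    have he := conv_hull_comb hb hr t0 t1.
    have hg := conv_hull_comb hl ht s0 s1.
    have := core hl1 hr1 hb2 ht2 t0 t1 s0 s1 hx hy (mid_b hc hl he ht0)
      (mid_b hc ht he ht0) (mid_b hc hr hg hs0) (mid_b hc hb hg hs0).
    rewrite /L /W; lra.
  have ntr : (fsep c1 c2 vt <= 0) != (fsep c1 c2 vr <= 0).
    by move: nlr nbt nlb; case: (fsep c1 c2 vl <= 0); case: (fsep c1 c2 vb <= 0);
      case: (fsep c1 c2 vr <= 0); case: (fsep c1 c2 vt <= 0).
  have [t [t0 t1 ht0]] := crossing ntr.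
  have [s [s0 s1 hs0]] := crossing nlb.
  have he := conv_hull_comb ht hr t0 t1.
  have hg := conv_hull_comb hl hb s0 s1.
  have q1 : (refl vl).1 = x0 by rewrite /= hl1.
  have q2 : (refl vr).1 = x1 by rewrite /= hr1.
  have q3 : (refl vt).2 = - y1 by rewrite /= ht2.
  have q4 : (refl vb).2 = - y0 by rewrite /= hb2.
  have hy' : - y1 <= - y0 by lra.
  have d1 : dist2 (refl vl) (comb (refl vt) (refl vr) t) <= 4 * rho^+2.
    by rewrite refl_dist; exact: (mid_b hc hl he ht0).
  have d2 : dist2 (refl vb) (comb (refl vt) (refl vr) t) <= 4 * rho^+2.
    by rewrite refl_dist; exact: (mid_b hc hb he ht0).
  have d3 : dist2 (refl vr) (comb (refl vl) (refl vb) s) <= 4 * rho^+2.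
    by rewrite refl_dist; exact: (mid_b hc hr hg hs0).
  have d4 : dist2 (refl vt) (comb (refl vl) (refl vb) s) <= 4 * rho^+2.
    by rewrite refl_dist; exact: (mid_b hc ht hg hs0).
  have H := core q1 q2 q3 q4 t0 t1 s0 s1 hx hy' d1 d2 d3 d4.
  have E : - y0 - - y1 = y1 - y0 by ring.
  rewrite E in H.
  rewrite /L /W; lra.
have ne : nonempty [set rho : R | 0 <= rho /\ exists c1 c2 : pt R,
    conv_hull sq `<=` disk c1 rho `|` disk c2 rho].
  exists ((x1 - x0) + (y1 - y0)); split; first lra.
  exists (x0, y0), (x0, y0) => z hz; left.
  case: (hbox z hz) => /andP[a1 a2] /andP[b1 b2].
  rewrite /disk /=.
  have e1 : 0 <= z.1 - x0 by lra.
  have e2 : 0 <= z.2 - y0 by lra.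
  nra.
have lb : lbound [set rho : R | 0 <= rho /\ exists c1 c2 : pt R,
    conv_hull sq `<=` disk c1 rho `|` disk c2 rho] (r / 2).
  move=> rho [rho0 [c1 [c2 hc]]].
  have k := key rho c1 c2 rho0 hc.
  have hs : Num.sqrt (L^+2 + 4 * W^+2) <= 8 * rho.
    have h8 : 0 <= 8 * rho by lra.
    rewrite -(ger0_norm h8) -sqrtr_sqr ler_sqrt ?sqr_ge0 //.
    have -> : (8 * rho)^+2 = 64 * rho^+2 by ring.
    exact: k.
  rewrite /r; lra.
have := lb_le_inf ne lb.
rewrite /r_opt; lra.
Qed.
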